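(* Let $\phi:v_{\mathcal{C},j}\mapsto y^{n_{\mathcal{C},j}}$ be a cyclotomic specialization and let $\chi,\psi\in\mathrm{Irr}(W)$ with sets of factor degrees $\mathcal{F}_\chi,\mathcal{F}_\psi$ (with respect to fixed factorizations of their generic Schur elements). If $a_{\chi,\epsilon}(\mathbf{t})=a_{\psi,\epsilon}(\mathbf{t})$ (resp. $A_{\chi,\epsilon}(\mathbf{t})=A_{\psi,\epsilon}(\mathbf{t})$) as polynomials in $\mathbf{t}$ for every good sign map $\epsilon$ for $\mathcal{F}_\chi\cup\mathcal{F}_\psi$, then $a_{\chi_\phi}=a_{\psi_\phi}$ (resp. $A_{\chi_\phi}=A_{\psi_\phi}$).
   Context: Setting: $K\subset\mathbb{Q}(\mu_\infty)$ a number field with ring of integers $\mathbb{Z}_K$; $W$ a finite irreducible complex reflection group defined over $K$, reflecting-hyperplane orbits $\mathcal{C}$ with stabilizer orders $e_{\mathcal{C}}$; $\mathcal{H}$ its generic Hecke algebra (assumed free of rank $|W|$ with canonical symmetrizing form), over $\mathbb{Z}_K[\mathbf{v},\mathbf{v}^{-1}]$ with indeterminates $v_{\mathcal{C},j}$, $0\le j\le e_{\mathcal{C}}-1$ (Hecke parameters $u_{\mathcal{C},j}=\zeta_{e_{\mathcal{C}}}^jv_{\mathcal{C},j}^{|\mu(K)|}$). For $\chi\in\mathrm{Irr}(W)$, the generic Schur element is fixed in the factorized form $(\dagger)\ s_\chi(\mathbf{v})=\xi_\chi N_\chi\prod_{i\in I_\chi}\Psi_{\chi,i}(M_{\chi,i})^{n_{\chi,i}}$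 with $\xi_\chi\in\mathbb{Z}_K$, $N_\chi=\prod v_{\mathcal{C},j}^{b_{\mathcal{C},j}}$ ($\sum_jb_{\mathcal{C},j}=0$ for all $\mathcal{C}$), $\Psi_{\chi,i}$ $K$-cyclotomic polynomials in one variable, $M_{\chi,i}=\prod v_{\mathcal{C},j}^{a_{\mathcal{C},j}}$ monomials with $\gcd(a_{\mathcal{C},j})=1$ and $\sum_ja_{\mathcal{C},j}=0$ for all $\mathcal{C}$, $n_{\chi,i}$ positive integers. Factor degrees: let $\mathbf{t}=(t_{\mathcal{C},j})$ be indeterminates. For a factor $\Psi(M)$ of $(\dagger)$ with $M=\prod v_{\mathcal{C},j}^{a_{\mathcal{C},j}}$, its factor degree is $f_{\Psi(M)}(\mathbf{t})=\deg(\Psi)\sum_{\mathcal{C},j}a_{\mathcal{C},j}t_{\mathcal{C},j}$, and its coefficient $\mathbf{c}(f_{\Psi(M)})$ is the largest $n$ such that $\Psi(M)^n$ appears in $(\dagger)$. $\mathcal{F}_\chi$ is the set of factor degrees for $\chi$. Two factor degrees satisfy $f_1\sim f_2$ if $f_1=qf_2$ for some rational $q>0$. A good sign map for a set $\mathcal{F}$ of factor degrees is a map $\epsilon:\mathcal{F}\to\{-1,1\}$ with $\epsilon(f_1)=\epsilon(f_2)$ whenever $f_1\sim f_2$ and $\epsilon(f_1)=-\epsilon(f_2)$ whenever $f_1\sim -f_2$. For a good sign map $\epsilon$ (restricted to $\mathcal{F}_\chi$), the generic valuation and generic degree are $a_{\chi,\epsilon}(\mathbf{t})=\sum_{\mathcal{C},j}b_{\mathcal{C},j}t_{\mathcal{C},j}+\sum_{f\in\mathcal{F}_\chi,\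 \epsilon(f)=-1}\mathbf{c}(f)f$, and $A_{\chi,\epsilon}(\mathbf{t})=\sum_{\mathcal{C},j}b_{\mathcal{C},j}t_{\mathcal{C},j}+\sum_{f\in\mathcal{F}_\chi,\ \epsilon(f)=1}\mathbf{c}(f)f$. A cyclotomic specialization is a $\mathbb{Z}_K$-algebra morphism $\phi:v_{\mathcal{C},j}\mapsto y^{n_{\mathcal{C},j}}$ ($n_{\mathcal{C},j}\in\mathbb{Z}$) into $\mathbb{Z}_K[y,y^{-1}]$ such that each $\prod_j(z-\zeta_{e_{\mathcal{C}}}^jy^{n_{\mathcal{C},j}})$ is invariant under $\mathrm{Gal}(K(y)/K(y^{|\mu(K)|}))$; $\chi_\phi$ is the corresponding character of the specialized algebra, with Schur element $s_{\chi_\phi}(y)=\phi(s_\chi(\mathbf{v}))$, $a_{\chi_\phi}$ its valuation (order at $y=0$) and $A_{\chi_\phi}$ its degree ($-$order at $0$ of $s_{\chi_\phi}(1/y)$). *)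

(* Defs.v *)
From HB Require Import structures.
From mathcomp Require Import all_boot all_order all_algebra all_field.
Set Implicit Arguments. Unset Strict Implicit. Unset Printing Implicit Defensive.
Import Order.TTheory GRing.Theory Num.Theory.
Local Open Scope ring_scope.

(* K is a number field contained in Q(mu_oo), viewed inside algC: a subfield
   of algC contained in Q(z) for some primitive n-th root of unity z. *)
Definition cyclo_numfield (K : {pred algC}) : Prop :=
  [/\ 1 \in K,
      (forall x y, x \in K -> y \in K -> (x - y \in K) /\ (x * y \in K)),
      (forall x, x \in K -> x^-1 \in K) &
      exists2 n : nat, (0 < n)%N &
        exists2 z : algC, n.-primitive_root z &
          forall x, x \in K -> exists p : {poly rat}, x = (map_poly ratr p).[z]].

Definition ZK (K : {pred algC}) (x : algC) : Prop := x \in K /\ x \in Aint.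

Definition polyOverK (K : {pred algC}) (p : {poly algC}) : Prop :=
  forall i, p`_i \in K.

Definition K_cyclotomic (K : {pred algC}) (P : {poly algC}) : Prop :=
  [/\ polyOverK K P, P \is monic, (1 < size P)%N,
      (forall p q, polyOverK K p -> polyOverK K q -> P = p * q ->
                   size p = 1%N \/ size q = 1%N) &
      (forall z, root P z -> exists2 k : nat, (0 < k)%N & z ^+ k = 1)].

(* zeta_e = exp(2 i pi / e)  (e.-root (-1) = exp(i pi / e)) *)
Definition zeta (e : nat) : algC := (e.-root (-1)) ^+ 2.

Definition var (C : finType) (e : C -> nat) := {c : C & 'I_(e c)}.

(* a family of integers indexed by the variables (exponent vector /
   linear form in the indeterminates t_{C,j}) *)
Definition lin (C : finType) (e : C -> nat) := {ffun var e -> int}.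

Definition class_sums_zero (C : finType) (e : C -> nat) (a : lin e) : Prop :=
  forall c : C, \sum_(i : var e | tag i == c) a i = 0.

(* s(v) = xi * N * prod_i Psi_i(M_i)^{n_i}; N = prod v^{b}, M_i = prod v^{a_i} *)
Record fschur (C : finType) (e : C -> nat) := FSchur {
  fs_xi : algC;
  fs_b : lin e;
  fs_facs : seq ({poly algC} * lin e * nat) }.

Definition wf_fschur (K : {pred algC}) (C : finType) (e : C -> nat) (s : fschur e) : Prop :=
  [/\ ZK K (fs_xi s), class_sums_zero (fs_b s) &
      forall x, x \in fs_facs s ->
        [/\ K_cyclotomic K x.1.1,
            \big[gcdn/0%N]_(i : var e) `|x.1.2 i|%N = 1%N,
            class_sums_zero x.1.2 & (0 < x.2)%N]].

Definition fdeg (C : finType) (e : C -> nat) (x : {poly algC} * lin e * nat) : lin e :=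
  [ffun i => ((size x.1.1).-1)%:Z * x.1.2 i].

Definition fdegs (C : finType) (e : C -> nat) (s : fschur e) : seq (lin e) :=
  undup [seq fdeg x | x <- fs_facs s].

Definition fcoef (C : finType) (e : C -> nat) (s : fschur e) (f : lin e) : nat :=
  \sum_(x <- fs_facs s | fdeg x == f) x.2.

Definition fsim (C : finType) (e : C -> nat) (f1 f2 : lin e) : Prop :=
  exists2 q : rat, 0 < q & forall i, (f1 i)%:~R = q * (f2 i)%:~R.

(* good sign maps for a set F; eps f = true means +1, false means -1 *)
Definition good_sign (C : finType) (e : C -> nat) (F : seq (lin e)) (eps : lin e -> bool) : Prop :=
  forall f1 f2, f1 \in F -> f2 \in F ->
    (fsim f1 f2 -> eps f1 = eps f2) /\ (fsim f1 (- f2) -> eps f1 = ~~ eps f2).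

Definition gen_val (C : finType) (e : C -> nat) (s : fschur e) (eps : lin e -> bool) : lin e :=
  fs_b s + \sum_(f <- fdegs s | ~~ eps f) f *~ (fcoef s f)%:Z.
Definition gen_deg (C : finType) (e : C -> nat) (s : fschur e) (eps : lin e -> bool) : lin e :=
  fs_b s + \sum_(f <- fdegs s | eps f) f *~ (fcoef s f)%:Z.

(* Gal(K(y)/K(y^{|mu(K)|})) consists of the
   maps y |-> w y, w in mu(K); invariance of prod_j (z - zeta^j y^{n_{C,j}})
   is stated as an identity of polynomial functions in (z, y), y <> 0. *)
Definition cyclotomic_spec (K : {pred algC}) (C : finType) (e : C -> nat) (n : lin e) : Prop :=
  forall w : algC, w \in K -> (exists2 k : nat, (0 < k)%N & w ^+ k = 1) ->
  forall (c : C) (z y : algC), y != 0 ->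
    \prod_(j < e c) (z - zeta (e c) ^+ j * (w * y) ^ (n (Tagged (fun c => 'I_(e c)) j)))
    = \prod_(j < e c) (z - zeta (e c) ^+ j * y ^ (n (Tagged (fun c => 'I_(e c)) j))).

Definition spec_schur (C : finType) (e : C -> nat) (s : fschur e) (n : lin e) (y : algC) : algC :=
  fs_xi s * y ^ (\sum_i fs_b s i * n i)
  * \prod_(x <- fs_facs s) (x.1.1.[y ^ (\sum_i x.1.2 i * n i)]) ^+ x.2.

(* valuation (order at y = 0) of a Laurent polynomial given by its values on
   algC^*: s(y) = y^a P(y) with P a polynomial, P(0) <> 0 *)
Definition laurent_val (s : algC -> algC) (a : int) : Prop :=
  exists2 P : {poly algC}, P.[0] != 0 & forall y, y != 0 -> s y = y ^ a * P.[y].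

Definition laurent_deg (s : algC -> algC) (A : int) : Prop :=
  laurent_val (fun y => s y^-1) (- A).

(* Main.v *)
Require Import Defs.
From HB Require Import structures.
From mathcomp Require Import all_boot all_order all_algebra all_field.
From mathcomp Require Import zify.
Import Order.TTheory GRing.Theory Num.Theory.
Local Open Scope ring_scope.
Set Implicit Arguments. Unset Strict Implicit.

Lemma poly_nz_roots (p : {poly algC}) : (forall y, y != 0 -> p.[y] = 0) -> p = 0.
Proof.
move=> H; apply/eqP; apply/negPn/negP => nz.
suff: (size [seq (i.+1)%:R : algC | i <- iota 0 (size p)] < size p)%N.
  by rewrite size_map size_iota ltnn.
apply: max_poly_roots nz _ _.
  by apply/allP => y /mapP [i _ ->]; apply/rootP/H; rewrite pnatr_eq0.
rewrite map_inj_uniq ?iota_uniq // => i j /eqP; rewrite eqr_nat eqSS => /eqP //.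
Qed.

Lemma LV_ext (s1 s2 : algC -> algC) a : laurent_val s1 a ->
  (forall y, y != 0 -> s1 y = s2 y) -> laurent_val s2 a.
Proof. by move=> [P P0 HP] H; exists P => // y y0; rewrite -H // HP. Qed.

Lemma LV_uniq s a b : laurent_val s a -> laurent_val s b -> a = b.
Proof.
wlog lab : a b / a <= b.
  by move=> W Ha Hb; case: (lerP a b) => [h|/ltW h]; [apply: W|apply/esym/W].
move=> [P P0 HP] [R R0 HR].
set k := `|b - a|%N.
have hk : b = a + k%:Z by rewrite /k gez0_abs ?subr_ge0 // addrCA subrr addr0.
have E : P = 'X^k * R.
  apply/eqP; rewrite -subr_eq0; apply/eqP/poly_nz_roots => y y0.
  have := HP y y0; rewrite HR // hk exprzDr ?unitfE // -mulrA => /mulfI.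
  rewrite !hornerE => ->; first by rewrite subrr.
  by rewrite expfz_neq0.
move: P0; rewrite E !hornerE expr0n.
case: (k =P 0%N) => [k0 _|]; last by rewrite mul0r eqxx.
by rewrite hk k0 addr0.
Qed.

Lemma LV_mul s1 s2 a b : laurent_val s1 a -> laurent_val s2 b ->
  laurent_val (fun y => s1 y * s2 y) (a + b).
Proof.
move=> [P P0 HP] [R R0 HR]; exists (P * R); first by rewrite hornerM mulf_neq0.
by move=> y y0; rewrite HP // HR // exprzDr ?unitfE // hornerM mulrACA.
Qed.

Lemma LV_const (c : algC) : c != 0 -> laurent_val (fun _ => c) 0.
Proof. by move=> c0; exists c%:P => [|y _]; rewrite hornerC // expr0z mul1r. Qed.

Lemma LV_y (b : int) : laurent_val (fun y => y ^ b) b.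
Proof. by exists 1 => [|y _]; rewrite hornerC ?oner_eq0 // mulr1. Qed.

Lemma LV_exp s a (k : nat) : laurent_val s a -> laurent_val (fun y => s y ^+ k) (a * k%:Z).
Proof.
move=> H; elim: k => [|k IH].
  by rewrite mulr0; eapply (LV_ext (LV_const (oner_neq0 algC))) => y _; rewrite expr0.
by rewrite intS mulrDr mulr1; eapply (LV_ext (LV_mul H IH)) => y _ /=; rewrite exprS.
Qed.

Lemma LV_prod (X : eqType) (r : seq X) (F : X -> algC -> algC) (v : X -> int) :
  (forall x, x \in r -> laurent_val (F x) (v x)) ->
  laurent_val (fun y => \prod_(x <- r) F x y) (\sum_(x <- r) v x).
Proof.
elim: r => [|x r IH] H.
  by rewrite big_nil; eapply (LV_ext (LV_const (oner_neq0 algC))) => y _; rewrite big_nil.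
have Hr : forall z, z \in r -> laurent_val (F z) (v z).
  by move=> z zr; apply: H; rewrite in_cons zr orbT.
rewrite big_cons; eapply (LV_ext (LV_mul (H x (mem_head _ _)) (IH Hr))).
by move=> y _; rewrite big_cons.
Qed.

Lemma horner_inv (p : {poly algC}) u : u != 0 ->
  p.[u^-1] * u ^+ (size p).-1 = (Poly (rev p)).[u].
Proof.
move=> u0.
rewrite (@horner_coef_wide _ (size p) (Poly (rev p))); last first.
  by rewrite -(size_rev p) size_Poly.
rewrite horner_coef mulr_suml [rhs in _ = rhs](reindex_inj rev_ord_inj) /=.
apply: eq_bigr => i _.
have hi := ltn_ord i.
have E1 : (size p - (size p - i.+1).+1 = i)%N.
  by move: (size p) (nat_of_ord i) hi => N j hj; lia.
have E2 : ((size p).-1 = (size p - i.+1) + i)%N.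
  by move: (size p) (nat_of_ord i) hi => N j hj; lia.
have E3 : (size p - i.+1 < size p)%N.
  by move: (size p) (nat_of_ord i) hi => N j hj; lia.
rewrite coef_Poly nth_rev ?size_rev // E1 -mulrA; congr (_ * _).
by rewrite E2 exprD exprVn mulrCA mulVf ?mulr1 ?expf_neq0.
Qed.

Lemma LV_factor (Psi : {poly algC}) (m : int) : Psi != 0 -> Psi.[0] != 0 ->
  (m != 0) || (Psi.[1] != 0) ->
  laurent_val (fun y => Psi.[y ^ m]) (if m < 0 then m * ((size Psi).-1)%:Z else 0).
Proof.
move=> nz P0; case: m => k H1 /=.
  exists (Psi \Po 'X^k) => [|y _]; last by rewrite horner_comp hornerXn expr0z mul1r.
  rewrite horner_comp hornerXn expr0n; case: k H1 => [|k] //= H1.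
set d := (size Psi).-1.
exists (Poly (rev Psi) \Po 'X^(k.+1)) => [|y y0].
  rewrite horner_comp hornerXn expr0n /= horner_coef0 coef_Poly nth_rev ?size_poly_gt0 //.
  by rewrite subn1 -lead_coefE lead_coef_eq0.
rewrite -exprz_exp horner_comp hornerXn -horner_inv ?expf_neq0 //.
set u := y ^+ k.+1.
have u0 : u != 0 by rewrite expf_neq0.
rewrite /exprz /= -/u.
by rewrite exprVn mulrCA mulVf ?mulr1 ?expf_neq0.
Qed.

Definition dot (C : finType) (e : C -> nat) (n f : lin e) : int := \sum_i f i * n i.

Fixpoint plex (s : seq int) : bool :=
  if s is x :: s' then (if x == 0 then plex s' else 0 < x) else false.

Definition eps_of (C : finType) (e : C -> nat) (n : lin e) (f : lin e) : bool :=
  (0 < dot n f) || ((dot n f == 0) && plex [seq f i | i <- enum {: var e}]).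

Lemma sgn0 (x y : int) (q : rat) : q != 0 -> x%:~R = q * y%:~R -> (x == 0) = (y == 0).
Proof. by move=> q0 H; rewrite -(intr_eq0 rat) H mulf_eq0 (negbTE q0) intr_eq0. Qed.

Lemma sgnpos (x y : int) (q : rat) : 0 < q -> x%:~R = q * y%:~R -> (0 < x) = (0 < y).
Proof. by move=> q0 H; rewrite -(ltr0z rat) H pmulr_rgt0 // ltr0z. Qed.

Lemma sgnneg (x y : int) (q : rat) : q < 0 -> x%:~R = q * y%:~R -> (0 < x) = (y < 0).
Proof. by move=> q0 H; rewrite -(ltr0z rat) H nmulr_rgt0 // ltrz0. Qed.

Lemma plex_pos (X : Type) (l : seq X) (f g : X -> int) (q : rat) : 0 < q ->
  (forall i, (f i)%:~R = q * (g i)%:~R) -> plex (map f l) = plex (map g l).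
Proof.
move=> q0 H; elim: l => //= x l ->.
by rewrite (sgn0 (lt0r_neq0 q0) (H x)) (sgnpos q0 (H x)).
Qed.

Lemma plex_neg (X : Type) (l : seq X) (f g : X -> int) (q : rat) : q < 0 ->
  (forall i, (f i)%:~R = q * (g i)%:~R) -> has (fun i => g i != 0) l ->
  plex (map f l) = ~~ plex (map g l).
Proof.
move=> q0 H; elim: l => //= x l IH.
rewrite (sgn0 (ltr0_neq0 q0) (H x)) (sgnneg q0 (H x)).
case: (g x =P 0) => [gx0 /IH //|/eqP gx0 _].
by move: gx0; case: (ltgtP (g x) 0).
Qed.

Lemma dot_scale (C : finType) (e : C -> nat) (n f1 f2 : lin e) (q : rat) :
  (forall i, (f1 i)%:~R = q * (f2 i)%:~R) -> (dot n f1)%:~R = q * (dot n f2)%:~R.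
Proof.
move=> H; rewrite /dot !rmorph_sum mulr_sumr; apply: eq_bigr => i _.
by rewrite !rmorphM /= H mulrA.
Qed.

Lemma eps_good (C : finType) (e : C -> nat) (n : lin e) (F : seq (lin e)) :
  (forall f, f \in F -> exists i, f i != 0) -> good_sign F (eps_of n).
Proof.
move=> NZ f1 f2 _ f2F; split => [[q q0 Hq] | [q q0 Hq]].
  have Hd := dot_scale n Hq.
  by rewrite /eps_of (sgn0 (lt0r_neq0 q0) Hd) (sgnpos q0 Hd) (plex_pos _ q0 Hq).
have Hq' : forall i, (f1 i)%:~R = (- q) * (f2 i)%:~R.
  by move=> i; rewrite Hq ffunE rmorphN mulrN mulNr.
have qn : - q < 0 by rewrite oppr_lt0.
have Hd := dot_scale n Hq'.
have [i fi] := NZ f2 f2F.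
have hs : has (fun i => f2 i != 0) (enum {: var e}).
  by apply/hasP; exists i; rewrite ?mem_enum.
rewrite /eps_of (sgn0 (ltr0_neq0 qn) Hd) (sgnneg qn Hd) (plex_neg qn Hq' hs).
by case: (ltgtP (dot n f2) 0).
Qed.

Lemma eps_good_neg (C : finType) (e : C -> nat) (F : seq (lin e)) eps :
  good_sign F eps -> good_sign F (fun f => ~~ eps f).
Proof.
move=> G f1 f2 h1 h2; have [A B] := G f1 f2 h1 h2; split.
  by move=> /A ->.
by move=> /B ->.
Qed.

Lemma sum_undup (X T : eqType) (g : X -> T) (s : seq X) (P : pred T) (F : X -> int) :
  \sum_(f <- undup (map g s) | P f) \sum_(x <- s | g x == f) F x
  = \sum_(x <- s | P (g x)) F x.
Proof.
under eq_bigr do rewrite big_mkcond.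
rewrite exchange_big /= [RHS]big_mkcond; apply: eq_big_seq => x xs.
rewrite big_mkcond (bigD1_seq (g x)) ?undup_uniq ?mem_undup ?map_f //= eqxx.
rewrite big1 ?addr0 // => f fne; rewrite eq_sym (negbTE fne); by case: (P f).
Qed.

Lemma dotD (C : finType) (e : C -> nat) (n f g : lin e) : dot n (f + g) = dot n f + dot n g.
Proof. by rewrite /dot -big_split; apply: eq_bigr => i _; rewrite ffunE mulrDl. Qed.

Lemma dot_sum (C : finType) (e : C -> nat) (n : lin e) (X : Type) (r : seq X) (P : pred X)
  (G : X -> lin e) : dot n (\sum_(f <- r | P f) G f) = \sum_(f <- r | P f) dot n (G f).
Proof.
rewrite /dot; under eq_bigr do rewrite sum_ffunE mulr_suml.
exact: exchange_big.
Qed.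

Lemma dot_mulz (C : finType) (e : C -> nat) (n f : lin e) (z : int) :
  dot n (f *~ z) = dot n f * z.
Proof.
rewrite /dot mulr_suml; apply: eq_bigr => i _.
by rewrite ffunMzE -mulrzr intz mulrAC.
Qed.

Lemma dot_fdeg (C : finType) (e : C -> nat) (n : lin e) x :
  dot n (fdeg x) = ((size x.1.1).-1)%:Z * dot n x.1.2.
Proof. by rewrite /dot mulr_sumr; apply: eq_bigr => i _; rewrite ffunE mulrA. Qed.

Lemma cyc_facts (K : {pred algC}) (P : {poly algC}) : K_cyclotomic K P ->
  [/\ P != 0, P.[0] != 0 & (0 < (size P).-1)%N].
Proof.
case=> _ mon sz _ rt; split.
- exact: monic_neq0.
- apply/negP => /eqP P0; have [k k0] := rt 0 (introT eqP P0).
  by rewrite expr0n; case: k k0 => // k _ /eqP; rewrite eq_sym oner_eq0.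
- by move: sz; case: (size P) => // [[]].
Qed.

Lemma val_spec (K : {pred algC}) (C : finType) (e : C -> nat) (s : fschur e) (n : lin e) a :
  wf_fschur K s -> laurent_val (spec_schur s n) a -> a = dot n (gen_val s (eps_of n)).
Proof.
case=> _ _ wfx L.
have [G|B] := boolP ((fs_xi s != 0) &&
   all (fun x => (dot n x.1.2 != 0) || (x.1.1.[1] != 0)) (fs_facs s)); last first.
  exfalso; case: L => P P0 HP; move/negP: P0; apply.
  have Z : forall y, spec_schur s n y = 0.
    move: B; rewrite negb_and negbK => /orP [/eqP xi0 | /allPn [x xin H]] y.
      by rewrite /spec_schur xi0 !mul0r.
    move: H; rewrite negb_or !negbK => /andP [/eqP d0 /eqP p1].
    have [_ _ _ k0] := wfx x xin.
    have E : x.1.1.[y ^ dot n x.1.2] = 0 by rewrite d0 expr0z.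
    by rewrite /spec_schur (big_rem x xin) /= E expr0n eqn0Ngt k0 mul0r mulr0.
  have -> : P = 0.
    apply: poly_nz_roots => y y0; have := HP y y0; rewrite Z => /esym/eqP.
    by rewrite mulf_eq0 expfz_eq0 (negbTE y0) andbF => /eqP.
  by rewrite horner0.
case/andP: G => xi0 /allP G.
have Hx : forall x, x \in fs_facs s -> laurent_val (fun y => (x.1.1.[y ^ dot n x.1.2]) ^+ x.2)
   ((if dot n x.1.2 < 0 then dot n x.1.2 * ((size x.1.1).-1)%:Z else 0) * x.2%:Z).
  move=> x xin; have [cx _ _ _] := wfx x xin; have [nz p0 _] := cyc_facts cx.
  exact: LV_exp (LV_factor nz p0 (G x xin)).
have L2 := LV_mul (LV_mul (LV_const xi0) (LV_y (dot n (fs_b s)))) (LV_prod Hx).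
rewrite (LV_uniq L L2) add0r /gen_val dotD dot_sum; congr (_ + _).
symmetry.
under eq_bigr do rewrite dot_mulz /fcoef (big_morph Posz PoszD (erefl (0%:Z))) mulr_sumr.
rewrite (eq_bigr (fun f => \sum_(x <- fs_facs s | fdeg x == f) dot n (fdeg x) * x.2%:Z)); last first.
  by move=> f _; apply: eq_bigr => x /eqP ->.
rewrite /fdegs sum_undup [LHS]big_mkcond; apply: eq_big_seq => x xin.
have [cx _ _ _] := wfx x xin; have [_ _ dp] := cyc_facts cx.
rewrite /eps_of !dot_fdeg.
set d := (size x.1.1).-1; set m := dot n x.1.2.
have dz : (0 < d%:Z) by rewrite ltz_nat.
case: (ltgtP m 0) => hm.
- by rewrite pmulr_rgt0 // (lt_gtF hm) mulf_eq0 (lt_eqF hm) (gt_eqF dz) /= [m * _]mulrC.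
- by rewrite pmulr_rgt0 // hm mul0r.
- by rewrite hm !mulr0 mul0r; case: ifP.
Qed.

Lemma fdegs_nz (K : {pred algC}) (C : finType) (e : C -> nat) (s : fschur e) :
  wf_fschur K s -> forall f, f \in fdegs s -> exists i, f i != 0.
Proof.
case=> _ _ wfx f; rewrite mem_undup => /mapP [x xin ->].
have [cx g _ _] := wfx x xin; have [_ _ dp] := cyc_facts cx.
case: (pickP (fun i => x.1.2 i != 0)) => [i hi | H0].
  by exists i; rewrite ffunE mulf_neq0 // eqz_nat -lt0n.
exfalso; move: g; rewrite big1 // => i _.
by move: (H0 i) => /negbFE/eqP ->.
Qed.

Lemma fdegs_cat_nz (K : {pred algC}) (C : finType) (e : C -> nat) (s1 s2 : fschur e) :
  wf_fschur K s1 -> wf_fschur K s2 ->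
  forall f, f \in fdegs s1 ++ fdegs s2 -> exists i, f i != 0.
Proof.
move=> w1 w2 f; rewrite mem_cat => /orP [] h; [exact: fdegs_nz w1 f h | exact: fdegs_nz w2 f h].
Qed.

Lemma spec_inv (C : finType) (e : C -> nat) (s : fschur e) (n : lin e) y :
  spec_schur s n y^-1 = spec_schur s (- n) y.
Proof.
rewrite /spec_schur exprz_inv.
have E : forall f : lin e, \sum_i f i * (- n) i = - \sum_i f i * n i.
  by move=> f; rewrite -sumrN; apply: eq_bigr => i _; rewrite ffunE mulrN.
rewrite E; congr (_ * _); apply: eq_bigr => x _; by rewrite exprz_inv E.
Qed.

Unset Implicit Arguments.
Theorem proposition5p9 (K : {pred algC}) (C : finType) (e : C -> nat)
    (n : lin e) (chi psi : fschur e) :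
  cyclo_numfield K -> (forall c, (1 < e c)%N) ->
  cyclotomic_spec K n -> wf_fschur K chi -> wf_fschur K psi ->
  ((forall eps, good_sign (fdegs chi ++ fdegs psi) eps ->
       gen_val chi eps = gen_val psi eps) ->
     forall a1 a2, laurent_val (spec_schur chi n) a1 ->
       laurent_val (spec_schur psi n) a2 -> a1 = a2)
  /\
  ((forall eps, good_sign (fdegs chi ++ fdegs psi) eps ->
       gen_deg chi eps = gen_deg psi eps) ->
     forall A1 A2, laurent_deg (spec_schur chi n) A1 ->
       laurent_deg (spec_schur psi n) A2 -> A1 = A2).
Proof.
move=> _ _ _ w1 w2.
have NZ := fdegs_cat_nz w1 w2.
split.
  move=> H a1 a2 L1 L2.
  by rewrite (val_spec w1 L1) (val_spec w2 L2) H //; apply: eps_good.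
move=> H A1 A2 L1 L2; apply: oppr_inj.
have L1' : laurent_val (spec_schur chi (- n)) (- A1).
  by eapply (LV_ext L1) => y _; rewrite spec_inv.
have L2' : laurent_val (spec_schur psi (- n)) (- A2).
  by eapply (LV_ext L2) => y _; rewrite spec_inv.
rewrite (val_spec w1 L1') (val_spec w2 L2').
have := H (fun f => ~~ eps_of (- n) f) (eps_good_neg (eps_good (- n) NZ)).
by rewrite /gen_deg /gen_val => ->.
Qed.
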